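(* Let $S_X,S_Y$ be finite nonempty action sets, $\varphi:S_X\times S_Y\to\mathbb{R}$, $\lambda\in[0,1)$, and let $\tau_X^+,\tau_X^-\in\Delta(S_X)$ satisfy $\max_{s_Y}\varphi(\tau_X^-,s_Y)\le0\le\min_{s_Y}\varphi(\tau_X^+,s_Y)$ together with $$\min_{s_Y}\varphi(\tau_X^+,s_Y)\ge(1-\lambda)\max_{s_Y}\varphi(\tau_X^+,s_Y)+\lambda\max_{s_Y}\varphi(\tau_X^-,s_Y),$$ $$\max_{s_Y}\varphi(\tau_X^-,s_Y)\le\lambda\min_{s_Y}\varphi(\tau_X^+,s_Y)+(1-\lambda)\min_{s_Y}\varphi(\tau_X^-,s_Y).$$ Then $X$ can enforce $\varphi\equiv0$ using a two-point reactive learning strategy (mixing $\tau_X^+$ and $\tau_X^-$), i.e., there is a $(\varphi,\lambda)$-autocratic two-point reactive learning strategy.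
   Context: Two players $X,Y$ play a repeated game with finite action sets $S_X,S_Y$; $\Delta(S)$ denotes the probability distributions on $S$; $\varphi(\tau_X,s_Y)=\mathbb{E}_{s_X\sim\tau_X}[\varphi(s_X,s_Y)]$; maxima/minima over $s_Y$ are over $S_Y$. Histories: $\mathcal{H}=\bigcup_{T\ge0}(S_X\times S_Y)^T$; behavioral strategies are maps $\sigma:\mathcal{H}\to\Delta(S)$; players independently draw actions each round from their strategies evaluated at the history of realized action pairs, with $\mathbb{E}_{\sigma_X,\sigma_Y}$ the expectation over the resulting play. $\sigma_X$ is $(\varphi,\lambda)$-autocratic if for every behavioral strategy $\sigma_Y$ of $Y$, $\mathbb{E}_{\sigma_X,\sigma_Y}[(1-\lambda)\sum_{t\ge0}\lambda^t\varphi(s_X^t,s_Y^t)]=0$. A two-point reactive learning strategy mixing $\tau_X^+,\tau_X^-$ is given by $p_0\in[0,1]$ and $p^*:[0,1]\times S_Y\to[0,1]$: it plays $p_0\tau_X^++(1-p_0)\tau_X^-$ in round $0$ and, if it played $p\tau_X^++(1-p)\tau_X^-$ in round $t$ and $Y$ played $s_Y$, it plays $p^*[p,s_Y]\tau_X^++(1-p^*[p,s_Y])\tau_X^-$ in round $t+1$. *)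

(* Defs.v *)
From HB Require Import structures.
From mathcomp Require Import all_boot all_order all_algebra.
From mathcomp Require Import all_classical all_reals topology normedtype sequences.
Set Implicit Arguments. Unset Strict Implicit. Unset Printing Implicit Defensive.
Import Order.TTheory GRing.Theory Num.Theory.
Import numFieldNormedType.Exports.
Local Open Scope classical_set_scope.
Local Open Scope ring_scope.

Section Game.
Variables (R : realType) (SX SY : finType).

Definition is_dist (S : finType) (tau : {ffun S -> R}) : Prop :=
  (forall s, 0 <= tau s) /\ \sum_(s : S) tau s = 1.

(* histories: sequences of realized action pairs, oldest first *)
Definition history := seq (SX * SY).

Definition phi_mix (phi : SX -> SY -> R) (tau : {ffun SX -> R}) (y : SY) : R :=
  \sum_(x : SX) tau x * phi x y.

(* max / min over s_Y in S_Y (S_Y assumed nonempty in the theorem) *)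
Definition max_phi (phi : SX -> SY -> R) (tau : {ffun SX -> R}) : R :=
  match [pick y : SY] with
  | Some y0 => \big[Num.max/phi_mix phi tau y0]_(y : SY) phi_mix phi tau y
  | None => 0 end.
Definition min_phi (phi : SX -> SY -> R) (tau : {ffun SX -> R}) : R :=
  match [pick y : SY] with
  | Some y0 => \big[Num.min/phi_mix phi tau y0]_(y : SY) phi_mix phi tau y
  | None => 0 end.

Fixpoint hist_prob_aux (sX : history -> {ffun SX -> R}) (sY : history -> {ffun SY -> R})
  (pre : history) (rest : history) : R :=
  match rest with
  | [::] => 1
  | (x, y) :: r => sX pre x * sY pre y * hist_prob_aux sX sY (rcons pre (x, y)) r
  end.
Definition hist_prob sX sY (h : history) : R := hist_prob_aux sX sY [::] h.

Definition stage_payoff (phi : SX -> SY -> R)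
  (sX : history -> {ffun SX -> R}) (sY : history -> {ffun SY -> R}) (t : nat) : R :=
  \sum_(h : t.-tuple (SX * SY))
     hist_prob sX sY h *
     (\sum_(x : SX) \sum_(y : SY) sX h x * sY h y * phi x y).

(* (phi, lambda)-autocratic: for every behavioral strategy of Y, the expected
   normalized discounted payoff E[(1-lambda) sum_t lambda^t phi(s^t)] equals 0,
   expressed as the series of expected discounted stage payoffs converging to 0
   (the sum converges absolutely, so this equals the expectation of the sum) *)
Definition autocratic (phi : SX -> SY -> R) (lam : R)
  (sX : history -> {ffun SX -> R}) : Prop :=
  forall sY : history -> {ffun SY -> R},
    (forall h, is_dist (sY h)) ->
    (fun n : nat => \sum_(0 <= t < n) (1 - lam) * lam ^+ t * stage_payoff phi sX sY t)
      @ \oo --> (0 : R).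

Definition rl_state (p0 : R) (pstar : R -> SY -> R) (h : history) : R :=
  foldl (fun p xy => pstar p xy.2) p0 h.

Definition two_point_strategy (taup taum : {ffun SX -> R}) (p0 : R)
  (pstar : R -> SY -> R) : history -> {ffun SX -> R} :=
  fun h => [ffun x => rl_state p0 pstar h * taup x
                      + (1 - rl_state p0 pstar h) * taum x].

End Game.

(* Main.v *)
Require Import Defs.
From HB Require Import structures.
From mathcomp Require Import all_boot all_order all_algebra.
From mathcomp Require Import all_classical all_reals topology normedtype sequences.
From mathcomp Require Import ring lra.
Import Order.TTheory GRing.Theory Num.Theory.
Local Open Scope ring_scope.

Definition Wf {R : realFieldType} (Bm D q : R) := Bm + q * D.
Definition psf {R : realFieldType} (lam Bm D w m : R) := ((w - (1 - lam) * m) / lam - Bm) / D.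

Lemma key (R : realFieldType) (lam Ap Bp Am Bm a b p : R) :
  0 <= lam -> lam < 1 -> Bm <= 0 -> 0 <= Ap ->
  Ap >= (1 - lam) * Bp + lam * Bm ->
  Bm <= lam * Ap + (1 - lam) * Am ->
  Ap <= a <= Bp -> Am <= b <= Bm -> 0 <= p <= 1 ->
  let D := Ap - Bm in let m := p * a + (1 - p) * b in
  Wf Bm D p = (1 - lam) * m + lam * Wf Bm D (psf lam Bm D (Wf Bm D p) m) /\
  0 <= psf lam Bm D (Wf Bm D p) m <= 1.
Proof.
move=> l0 l1 hB hA h1 h2 /andP[a1 a2] /andP[b1 b2] /andP[p0 p1] D m.
rewrite /psf /Wf.
have [D0|Dn0] := eqVneq D 0.
  have eA : Ap = 0 by rewrite /D in D0; lra.
  have eB : Bm = 0 by rewrite /D in D0; lra.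
  rewrite eA eB mulr0 addr0 in h1; rewrite eA eB mulr0 add0r in h2.
  have hBp : Bp <= 0.
    have : (1 - lam) * Bp <= 0 by lra.
    by rewrite pmulr_rle0 // subr_gt0.
  have hAm : 0 <= Am.
    have : 0 <= (1 - lam) * Am by lra.
    by rewrite pmulr_rge0 // subr_gt0.
  have ea : a = 0 by lra.
  have eb : b = 0 by lra.
  rewrite D0 invr0 !mulr0 /m ea eb eB; split; first lra.
  by rewrite lexx ler01.
have Dp : 0 < D by rewrite lt_neqAle eq_sym Dn0 /D subr_ge0 (le_trans hB hA).
have [el|ln0] := eqVneq lam 0.
  rewrite el !(subr0, mul1r, mul0r, addr0, add0r) in h1 h2.
  rewrite el.
  have ea : a = Ap by lra.
  have eb : b = Bm by lra.
  rewrite invr0 mulr0 mul0r addr0 subr0 mul1r /m ea eb /D add0r.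
  split; first lra.
  have Dp' : 0 < Ap - Bm := Dp.
  apply/andP; split; first by apply: divr_ge0; lra.
  rewrite ler_pdivrMr // mul1r; lra.
have lp : 0 < lam by rewrite lt_neqAle eq_sym ln0 l0.
have -> : ((Bm + p * D - (1 - lam) * m) / lam - Bm) / D =
          (Bm + p * D - (1 - lam) * m - lam * Bm) / (lam * D).
  by field; rewrite Dn0 ln0.
split.
  by field; rewrite Dn0 ln0.
have p1' : 0 <= 1 - p by lra.
have hm1 : m <= p * Bp + (1 - p) * Bm.
  rewrite /m; have := ler_wpM2l p0 a2; have := ler_wpM2l p1' b2; lra.
have hm2 : p * Ap + (1 - p) * Am <= m.
  rewrite /m; have := ler_wpM2l p0 a1; have := ler_wpM2l p1' b1; lra.
have l1' : 0 <= 1 - lam by lra.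
have f1 := ler_wpM2l l1' hm1.
have f2 := ler_wpM2l l1' hm2.
have f3 : 0 <= p * (Ap - (1 - lam) * Bp - lam * Bm) by apply: mulr_ge0 => //; lra.
have f4 : 0 <= (1 - p) * (lam * Ap + (1 - lam) * Am - Bm) by apply: mulr_ge0 => //; lra.
apply/andP; split.
  apply: divr_ge0; last by apply: mulr_ge0 => //; lra.
  rewrite /D in f1 f2 f3 f4 *; nra.
rewrite ler_pdivrMr ?mulr_gt0 // mul1r.
rewrite /D in f1 f2 f3 f4 *; nra.
Qed.

Section Helpers.
Variable R : realType.

Lemma sum_tuple0 (T : finType) (F : seq T -> R) :
  \sum_(h : 0.-tuple T) F h = F [::].
Proof.
rewrite (eq_bigr (fun _ => F [::])); last by move=> h _; rewrite tuple0.
by rewrite sumr_const card_tuple expn0.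
Qed.

Lemma sum_tuple_cons (T : finType) n (F : seq T -> R) :
  \sum_(h : n.+1.-tuple T) F h = \sum_(a : T) \sum_(h : n.-tuple T) F (a :: h).
Proof.
rewrite pair_big /=.
rewrite (reindex (fun u : T * n.-tuple T => [tuple of u.1 :: u.2])) /=.
  by apply: eq_bigr.
exists (fun t : n.+1.-tuple T => (thead t, [tuple of behead t])).
  by move=> [a h] _ /=; congr pair; apply: val_inj.
by move=> t _; apply: val_inj => /=; rewrite [in RHS](tuple_eta t).
Qed.

Lemma sum_tuple_rcons (T : finType) n (G : seq T -> R) :
  \sum_(h : n.+1.-tuple T) G h = \sum_(h : n.-tuple T) \sum_(a : T) G (rcons h a).
Proof.
elim: n G => [|n IH] G.
  rewrite sum_tuple_cons (@sum_tuple0 T (fun h => \sum_a G (rcons h a))) /=.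
  by apply: eq_bigr => a _; rewrite (@sum_tuple0 T (fun h => G (a :: h))).
rewrite (@sum_tuple_cons T n.+1 G).
rewrite (@sum_tuple_cons T n (fun h => \sum_a G (rcons h a))) /=.
apply: eq_bigr => b _; exact: (IH (fun h => G (b :: h))).
Qed.

Variables SX SY : finType.

Lemma hist_prob_rcons (sX : history SX SY -> {ffun SX -> R}) (sY : history SX SY -> {ffun SY -> R})
   (h : history SX SY) pre x y :
  hist_prob_aux sX sY pre (rcons h (x, y)) =
  hist_prob_aux sX sY pre h * (sX (pre ++ h) x * sY (pre ++ h) y).
Proof.
elim: h pre => [|[a b] h IH] pre /=; first by rewrite cats0 mulr1 mul1r.
by rewrite IH cat_rcons mulrA.
Qed.

Lemma step_sum (sX : history SX SY -> {ffun SX -> R}) (sY : history SX SY -> {ffun SY -> R})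
   n (g : history SX SY -> R) :
  \sum_(h : n.+1.-tuple (SX * SY)) hist_prob sX sY h * g h =
  \sum_(h : n.-tuple (SX * SY)) hist_prob sX sY h *
     (\sum_(x : SX) \sum_(y : SY) sX h x * sY h y * g (rcons h (x, y))).
Proof.
rewrite (@sum_tuple_rcons _ n (fun h => hist_prob sX sY h * g h)).
apply: eq_bigr => h _.
rewrite pair_big /= mulr_sumr; apply: eq_bigr => [[x y]] _ /=.
by rewrite /hist_prob hist_prob_rcons /= !mulrA.
Qed.


Lemma sum2_lin (F G : SX -> SY -> R) (a b : R) :
  \sum_x \sum_y (a * F x y + b * G x y) =
  a * (\sum_x \sum_y F x y) + b * (\sum_x \sum_y G x y).
Proof.
rewrite !mulr_sumr -big_split; apply: eq_bigr => x _.
by rewrite !mulr_sumr -big_split.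
Qed.

Lemma hist_prob_ge0 (sX : history SX SY -> {ffun SX -> R}) (sY : history SX SY -> {ffun SY -> R}) :
  (forall h x, 0 <= sX h x) -> (forall h y, 0 <= sY h y) ->
  forall h pre, 0 <= hist_prob_aux sX sY pre h.
Proof.
move=> hx hy; elim=> [|[x y] h IH] pre /=; first exact: ler01.
by rewrite !mulr_ge0.
Qed.

Set Implicit Arguments. Unset Strict Implicit.
Section Tele.
Variables (phi : SX -> SY -> R) (lam : R)
  (sX : history SX SY -> {ffun SX -> R}) (sY : history SX SY -> {ffun SY -> R})
  (V : history SX SY -> R).
Hypothesis hV : forall h, \sum_x \sum_y sX h x * sY h y *
   ((1 - lam) * phi x y + lam * V (rcons h (x, y))) = V h.
Hypothesis hone : forall h, \sum_x \sum_y sX h x * sY h y = 1.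

Definition EV n := \sum_(h : n.-tuple (SX * SY)) hist_prob sX sY h * V h.
Definition TP n := \sum_(h : n.-tuple (SX * SY)) hist_prob sX sY h.

Lemma EV_step n : EV n = (1 - lam) * stage_payoff phi sX sY n + lam * EV n.+1.
Proof.
rewrite /EV step_sum /stage_payoff !mulr_sumr -big_split; apply: eq_bigr => h _ /=.
rewrite -[in LHS]hV !mulr_sumr -big_split; apply: eq_bigr => x _.
rewrite !mulr_sumr -big_split; apply: eq_bigr => y _ /=.
ring.
Qed.

Lemma TP1 n : TP n = 1.
Proof.
elim: n => [|n IH]; first by rewrite /TP (@sum_tuple0 _ (fun h => hist_prob sX sY h)).
rewrite -IH /TP.
rewrite (eq_bigr (fun h : n.+1.-tuple (SX * SY) => hist_prob sX sY h * 1)); last by move=> h _; rewrite mulr1.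
rewrite (step_sum sX sY n (fun _ => 1)); apply: eq_bigr => h _.
rewrite -[RHS]mulr1 -{2}(hone h); congr (_ * _).
by apply: eq_bigr => x _; apply: eq_bigr => y _; rewrite mulr1.
Qed.

Lemma partial_sum n :
  \sum_(0 <= t < n) (1 - lam) * lam ^+ t * stage_payoff phi sX sY t =
  EV 0 - lam ^+ n * EV n.
Proof.
elim: n => [|n IH]; first by rewrite big_geq // expr0 mul1r subrr.
rewrite big_nat_recr //= IH (EV_step n) exprS.
ring.
Qed.

Lemma EV_bound lo hi n : (forall h, lo <= V h <= hi) ->
  (forall h, 0 <= hist_prob sX sY h) -> lo <= EV n <= hi.
Proof.
move=> hb hP; apply/andP; split.
  rewrite -[lo]mulr1 -(TP1 n) /TP mulr_sumr /EV; apply: ler_sum => h _.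
  by rewrite mulrC ler_wpM2l // (andP (hb h)).1.
rewrite -[hi]mulr1 -(TP1 n) /TP mulr_sumr /EV; apply: ler_sum => h _.
by rewrite [X in _ <= X]mulrC ler_wpM2l // (andP (hb h)).2.
Qed.

End Tele.
End Helpers.

Theorem corollary1 (R : realType) (SX SY : finType)
  (hX : (0 < #|SX|)%N) (hY : (0 < #|SY|)%N)
  (phi : SX -> SY -> R) (lam : R) (hlam0 : 0 <= lam) (hlam1 : lam < 1)
  (taup taum : {ffun SX -> R})
  (hp : is_dist taup) (hm : is_dist taum)
  (h0 : max_phi phi taum <= 0) (h0' : 0 <= min_phi phi taup)
  (h1 : min_phi phi taup >= (1 - lam) * max_phi phi taup + lam * max_phi phi taum)
  (h2 : max_phi phi taum <= lam * min_phi phi taup + (1 - lam) * min_phi phi taum) :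
  exists (p0 : R) (pstar : R -> SY -> R),
    [/\ 0 <= p0 <= 1,
        (forall p y, 0 <= p <= 1 -> 0 <= pstar p y <= 1) &
        autocratic phi lam (two_point_strategy taup taum p0 pstar)].
Proof.
have hmax tau y : phi_mix phi tau y <= max_phi phi tau.
  rewrite /max_phi; case: pickP => [y0 _|/(_ y) //]; exact: le_bigmax.
have hmin tau y : min_phi phi tau <= phi_mix phi tau y.
  rewrite /min_phi; case: pickP => [y0 _|/(_ y) //]; exact: bigmin_le.
move: h0 h0' h1 h2 (hmax taup) (hmax taum) (hmin taup) (hmin taum).
set Ap := min_phi phi taup; set Bp := max_phi phi taup.
set Am := min_phi phi taum; set Bm := max_phi phi taum.
move=> h0 h0' h1 h2 hBp hBm hAp hAm.
set D := Ap - Bm.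
pose mix p y := p * phi_mix phi taup y + (1 - p) * phi_mix phi taum y.
pose pst := fun p y => psf lam Bm D (Wf Bm D p) (mix p y).
have hkey p y : 0 <= p <= 1 ->
    Wf Bm D p = (1 - lam) * mix p y + lam * Wf Bm D (pst p y) /\ 0 <= pst p y <= 1.
  move=> hp01.
  have ha : Ap <= phi_mix phi taup y <= Bp by rewrite hAp hBp.
  have hb : Am <= phi_mix phi taum y <= Bm by rewrite hAm hBm.
  exact: (@key R lam Ap Bp Am Bm (phi_mix phi taup y) (phi_mix phi taum y) p
    hlam0 hlam1 h0 h0' h1 h2 ha hb hp01).
have Dge : 0 <= D by rewrite /D subr_ge0 (le_trans h0 h0').
have hp0 : 0 <= - Bm / D <= 1.
  have [D0|Dn0] := eqVneq D 0; first by rewrite D0 invr0 mulr0 lexx ler01.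
  have Dp : 0 < D by rewrite lt_neqAle eq_sym Dn0 Dge.
  apply/andP; split; first by apply: divr_ge0; rewrite ?oppr_ge0.
  rewrite ler_pdivrMr // mul1r /D; lra.
have hinv : forall h q, 0 <= q <= 1 ->
    0 <= foldl (fun p (xy : SX * SY) => pst p xy.2) q h <= 1.
  elim=> [|a h IH] q hq //=; apply: IH; exact: (hkey q a.2 hq).2.
exists (- Bm / D), pst; split => //.
  by move=> p y hp01; exact: (hkey p y hp01).2.
move=> sY hsY.
set sX := two_point_strategy taup taum (- Bm / D) pst.
pose st (h : history SX SY) := rl_state (- Bm / D) pst h.
have hst h : 0 <= st h <= 1 by exact: hinv.
have sXE h x : sX h x = st h * taup x + (1 - st h) * taum x by rewrite /sX /two_point_strategy ffunE.
have hsXge h x : 0 <= sX h x.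
  have [s0 s1] := andP (hst h).
  rewrite sXE addr_ge0 // mulr_ge0 //; first by case: hp.
    by rewrite subr_ge0.
  by case: hm.
have hsXsum h : \sum_x sX h x = 1.
  under eq_bigr do rewrite sXE.
  rewrite big_split /= -!mulr_sumr (proj2 hp) (proj2 hm); ring.
have hsXmix h y : \sum_x sX h x * phi x y = mix (st h) y.
  rewrite /mix /phi_mix !mulr_sumr -big_split; apply: eq_bigr => x _ /=.
  rewrite sXE; ring.
have hone h : \sum_x \sum_y sX h x * sY h y = 1.
  rewrite -(hsXsum h); apply: eq_bigr => x _.
  by rewrite -mulr_sumr (proj2 (hsY h)) mulr1.
pose V (h : history SX SY) := Wf Bm D (st h).
have hV h : \sum_x \sum_y sX h x * sY h y *
   ((1 - lam) * phi x y + lam * V (rcons h (x, y))) = V h.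
  rewrite exchange_big /=.
  have E y : \sum_x sX h x * sY h y * ((1 - lam) * phi x y + lam * V (rcons h (x, y)))
      = sY h y * ((1 - lam) * (\sum_x sX h x * phi x y) + lam * Wf Bm D (pst (st h) y) * (\sum_x sX h x)).
    rewrite mulrDr !mulr_sumr -big_split; apply: eq_bigr => x _ /=.
    rewrite /V /st /rl_state foldl_rcons /=; ring.
  under eq_bigr do rewrite E hsXsum hsXmix mulr1 -(proj1 (hkey _ _ (hst h))).
  by rewrite -mulr_suml (proj2 (hsY h)) mul1r.
have hPge h : 0 <= hist_prob sX sY h.
  rewrite /hist_prob; apply: hist_prob_ge0 => // hh yy; exact: (proj1 (hsY hh)).
have hb h : Bm <= V h <= Ap.
  have [s0 s1] := andP (hst h).
  rewrite /V /Wf /D; apply/andP; split.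
    by rewrite lerDl mulr_ge0 // subr_ge0 (le_trans h0 h0').
  have : st h * (Ap - Bm) <= 1 * (Ap - Bm) by rewrite ler_wpM2r // subr_ge0 (le_trans h0 h0').
  lra.
have hE0 : EV sX sY V 0 = 0.
  rewrite /EV (@sum_tuple0 _ _ (fun h => hist_prob sX sY h * V h)) /= /hist_prob /= mul1r.
  rewrite /V /st /rl_state /= /Wf.
  have [D0|Dn0] := eqVneq D 0.
    rewrite D0 mulr0 addr0; move: D0; rewrite /D; lra.
  by field.
apply: (@squeeze_cvgr _ _ _ _ (fun n => - Ap * lam ^+ n) (fun n => - Bm * lam ^+ n)).
- apply: nearW => n.
  rewrite (partial_sum hV) hE0 sub0r.
  have [e1 e2] := andP (EV_bound hone n hb hPge).
  have lp : 0 <= lam ^+ n by rewrite exprn_ge0.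
  have := ler_wpM2l lp e1; have := ler_wpM2l lp e2.
  set E := EV _ _ _ _; set L := lam ^+ n => q1 q2.
  rewrite (mulrC (- Ap)) (mulrC (- Bm)) !mulrN; lra.
- rewrite -(mulr0 (- Ap)); apply: cvgMr.
  by apply: cvg_expr; rewrite ger0_norm.
- rewrite -(mulr0 (- Bm)); apply: cvgMr.
  by apply: cvg_expr; rewrite ger0_norm.
Qed.
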